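(* Let $n>2$. If $n$ is odd, the Gale dual of $P(D_n)$ is (up to linear change of coordinates) a vector configuration in $\mathbb{R}$ consisting of $n$ copies of each of the vectors $1$ and $-1$. If $n=2m$ is even, the Gale dual of $P(D_n)$ is (up to linear change of coordinates) the vector configuration in $\mathbb{R}^2$ consisting of $m$ copies of each of the four vectors $[\pm1,0]^T$, $[0,\pm1]^T$.
   Context: Each $g\in S_n$ is identified with its $n\times n$ permutation matrix (entry $(i,j)$ is $1$ iff $g(i)=j$); $P(G)=\mathrm{conv}\{g:g\in G\}$. $D_n\le S_n$ is generated by $r=(1\ 2\ \cdots\ n)$ and $f=(1\ n)(2\ n-1)\cdots(\lfloor\frac{n+1}{2}\rfloor\ \lceil\frac{n+1}{2}\rceil)$. For a polytope with vertices $v_1,\dots,v_r$ and dimension $d$, its Gale dual is the configuration of columns $\overline{v}_1,\dots,\overline{v}_r\in\mathbb{R}^{r-d-1}$ of a matrix whose rows form a basis of the space of linear dependences $\{\lambda\in\mathbb{R}^r:\sum\lambda_iv_i=0\}$; it is unique up to linear change of coordinates. *)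

(* Defs.v *)
From mathcomp Require Import all_boot all_order all_algebra all_fingroup.
Set Implicit Arguments. Unset Strict Implicit. Unset Printing Implicit Defensive.
Import GRing.Theory Num.Theory.
Local Open Scope ring_scope.

(* Points are 0-indexed: 'I_n = {0,...,n-1} stands for {1,...,n}. *)
(* r = (1 2 ... n): i |-> i+1 mod n. *)
Definition rot_perm (n : nat) : {perm 'I_n} := perm (@ordS_inj n).
(* f = (1 n)(2 n-1)...: i |-> n+1-i, i.e. 0-indexed i |-> n-1-i. *)
Definition flip_perm (n : nat) : {perm 'I_n} := perm (@rev_ord_inj n).

Definition dihedral (n : nat) : {set {perm 'I_n}} :=
  <<[set rot_perm n; flip_perm n]>>%g.

(* Permutation matrix: perm_mx g i j = 1 iff g i = j (mathcomp convention). *)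
Definition pmx (R : pzRingType) (n : nat) (g : {perm 'I_n}) : 'M[R]_n :=
  perm_mx g.

Definition is_dependence (R : pzRingType) (n : nat) (G : {set {perm 'I_n}})
  (lam : {perm 'I_n} -> R) : Prop :=
  \sum_(g in G) lam g *: pmx R g = 0.

(* Gale dual: c g (in R^k, a row vector) is the column of the Gale matrix
   indexed by vertex g; the k rows  (g |-> c g 0 j)  must form a basis of the
   space of linear dependences of the vertices {pmx g | g in G}. *)
Definition is_gale_dual (R : fieldType) (n k : nat) (G : {set {perm 'I_n}})
  (c : {perm 'I_n} -> 'rV[R]_k) : Prop :=
  (forall lam : {perm 'I_n} -> R,
      is_dependence G lam <->
      exists a : 'rV[R]_k, forall g, g \in G -> lam g = \sum_(j < k) a 0 j * c g 0 j)
  /\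
  (forall a : 'rV[R]_k,
      (forall g, g \in G -> \sum_(j < k) a 0 j * c g 0 j = 0) -> a = 0).

Definition vec1 (R : pzRingType) (x : R) : 'rV[R]_1 := \row_(j < 1) x.
Definition vec2 (R : pzRingType) (x y : R) : 'rV[R]_2 :=
  \row_(j < 2) (if j == ord0 then x else y).
Arguments vec1 {R} x.
Arguments vec2 {R} x y.

(* Main.v *)
Require Import Defs.
From mathcomp Require Import all_boot all_order all_algebra all_fingroup.
From mathcomp Require Import ring.
Import GRing.Theory Num.Theory.
From mathcomp Require Import lra.
Local Open Scope ring_scope.
Section S.
Variable p : nat.
Local Notation N := p.+3.
Local Notation T := 'I_N.
Lemma two_neq0 : (2 : T) != 0.
Proof. by []. Qed.
Lemma NZ : (N%:R : T) = 0.
Proof. exact: (@pchar_Zp N). Qed.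
Lemma natT (i : T) : (val i)%:R = i.
Proof. exact: natr_Zp. Qed.

Lemma rotz_inj (k : T) : injective (fun i : T => i + k).
Proof. exact: addIr. Qed.
Definition rotz k : {perm T} := perm (rotz_inj k).
Lemma refz_inj (k : T) : injective (fun i : T => k - i).
Proof. by move=> x y /= /addrI /oppr_inj. Qed.
Definition refz k : {perm T} := perm (refz_inj k).
Lemma rotzE k i : rotz k i = i + k. Proof. by rewrite permE. Qed.
Lemma refzE k i : refz k i = k - i. Proof. by rewrite permE. Qed.

Lemma rotzM a b : (rotz a * rotz b)%g = rotz (a + b).
Proof. by apply/permP => i; rewrite permM !rotzE addrA. Qed.
Lemma rotrefM a b : (rotz a * refz b)%g = refz (b - a).
Proof. by apply/permP => i; rewrite permM ?rotzE ?refzE; ring. Qed.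
Lemma refrotM a b : (refz a * rotz b)%g = refz (a + b).
Proof. by apply/permP => i; rewrite permM ?rotzE ?refzE; ring. Qed.
Lemma refrefM a b : (refz a * refz b)%g = rotz (b - a).
Proof. by apply/permP => i; rewrite permM ?rotzE ?refzE; ring. Qed.


Lemma rot_rotz : rot_perm N = rotz 1.
Proof. by apply/permP => i; rewrite !permE; apply: val_inj => /=; rewrite modnDmr addn1. Qed.

Lemma rev_ordE (i : T) : rev_ord i = - 1 - i.
Proof.
have h : rev_ord i + (i + 1) = 0.
  rewrite -[rev_ord i]natT -[i in _ + (i + 1)]natT -(natrD _ _ 1) -natrD /=.
  by rewrite addn1 subnK //; exact: NZ.
have -> : rev_ord i = - (i + 1) by apply/eqP; rewrite -addr_eq0 h.
by rewrite opprD addrC.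
Qed.
Lemma flip_refz : flip_perm N = refz (-1).
Proof. by apply/permP => i; rewrite !permE rev_ordE. Qed.

Definition U : {set {perm T}} := [set rotz k | k in T] :|: [set refz k | k in T].

Lemma U_group : group_set U.
Proof.
apply/group_setP; split.
  apply/setUP; left; apply/imsetP; exists 0 => //; apply/permP => i.
  by rewrite rotzE addr0 perm1.
move=> x y /setUP [] /imsetP [a _ ->] /setUP [] /imsetP [b _ ->];
  apply/setUP.
- by left; apply/imsetP; exists (a + b); rewrite ?rotzM.
- by right; apply/imsetP; exists (b - a); rewrite ?rotrefM.
- by right; apply/imsetP; exists (a + b); rewrite ?refrotM.
- by left; apply/imsetP; exists (b - a); rewrite ?refrefM.
Qed.

Lemma rotzX (j : nat) : (rotz 1%R ^+ j)%g = rotz j%:R.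
Proof.
elim: j => [|j IH].
  by apply/permP => i; rewrite expg0 perm1 rotzE addr0.
by rewrite expgSr IH rotzM -[j.+1]addn1 natrD.
Qed.

Lemma dihedralE : dihedral N = U.
Proof.
apply/eqP; rewrite eqEsubset; apply/andP; split.
  rewrite /dihedral -[U]/(gval (Group U_group)) gen_subG.
  apply/subsetP => x; rewrite !inE => /orP [] /eqP ->; apply/orP.
    by left; apply/imsetP; exists 1; rewrite ?rot_rotz.
  by right; apply/imsetP; exists (-1); rewrite ?flip_refz.
have hr : rotz 1 \in dihedral N.
  by apply: mem_gen; rewrite !inE -rot_rotz eqxx.
have hf : refz (-1) \in dihedral N.
  by apply: mem_gen; rewrite !inE -flip_refz eqxx orbT.
have hrot k : rotz k \in dihedral N.
  by rewrite -(natT k) -rotzX; apply: groupX.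
apply/subsetP => x /setUP [] /imsetP [k _ ->]; first exact: hrot.
have -> : refz k = (refz (-1) * rotz (k + 1))%g.
  by rewrite refrotM; congr refz; ring.
by rewrite groupM // hrot.
Qed.

Lemma rotz_neq_refz a b : rotz a != refz b.
Proof.
apply/eqP => /permP h; have h0 := h 0; have h1 := h 1.
rewrite !rotzE !refzE add0r subr0 in h0 h1; subst b.
have e : (2:T) = (1 + a) - (a - 1) by ring.
by move: (two_neq0); rewrite e h1 subrr eqxx.
Qed.

Lemma rotz_injective : injective rotz.
Proof. by move=> a b /permP /(_ 0); rewrite !rotzE !add0r. Qed.
Lemma refz_injective : injective refz.
Proof. by move=> a b /permP /(_ 0); rewrite !refzE !subr0. Qed.

Lemma big_D (R : Type) (idx : R) (op : Monoid.com_law idx) (F : {perm T} -> R) :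
  \big[op/idx]_(g in dihedral N) F g =
  op (\big[op/idx]_(k : T) F (rotz k)) (\big[op/idx]_(k : T) F (refz k)).
Proof.
rewrite dihedralE /U.
rewrite (eq_bigl [predU [set rotz k | k in T] & [set refz k | k in T]]);
  last by move=> g; rewrite !inE.
rewrite bigU; last first.
  rewrite disjoint_subset; apply/subsetP => g /imsetP [a _ ->].
  rewrite inE; apply/imsetP => [[b _ /eqP]].
  by rewrite (negbTE (rotz_neq_refz a b)).
rewrite !big_imset //.
  by move=> a b _ _; apply: refz_injective.
by move=> a b _ _; apply: rotz_injective.
Qed.

Lemma sumrot (R : pzRingType) (lam : {perm T} -> R) i j :
  \sum_(k : T) (lam (rotz k) *: pmx R (rotz k)) i j = lam (rotz (j - i)).
Proof.
rewrite (bigD1 (j - i)) //= big1 ?addr0; last first.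
  move=> k hk; rewrite !mxE rotzE.
  case: eqP => [e|]; last by rewrite mulr0.
  have ek : i + k - i = k by ring.
  by move: hk; rewrite -e ek eqxx.
rewrite !mxE rotzE.
have -> : i + (j - i) = j by ring.
by rewrite !eqxx !mulr1.
Qed.

Lemma sumref (R : pzRingType) (lam : {perm T} -> R) i j :
  \sum_(k : T) (lam (refz k) *: pmx R (refz k)) i j = lam (refz (i + j)).
Proof.
rewrite (bigD1 (i + j)) //= big1 ?addr0; last first.
  move=> k hk; rewrite !mxE refzE.
  case: eqP => [e|]; last by rewrite mulr0.
  have ek : i + (k - i) = k by ring.
  by move: hk; rewrite -e ek eqxx.
rewrite !mxE refzE.
have -> : i + j - i = j by ring.
by rewrite !eqxx !mulr1.
Qed.

Lemma entryE (R : pzRingType) (lam : {perm T} -> R) i j :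
  (\sum_(g in dihedral N) lam g *: pmx R g) i j =
  lam (rotz (j - i)) + lam (refz (i + j)).
Proof. by rewrite summxE big_D /= sumrot sumref. Qed.

Lemma depE (R : pzRingType) (lam : {perm T} -> R) :
  is_dependence (dihedral N) lam <->
  forall i j : T, lam (rotz (j - i)) + lam (refz (i + j)) = 0.
Proof.
split.
  by move=> H i j; rewrite -entryE H mxE.
by move=> H; apply/matrixP => i j; rewrite entryE H mxE.
Qed.

Set Implicit Arguments. Unset Strict Implicit.
Lemma rotz_in k : rotz k \in dihedral N.
Proof. by rewrite dihedralE /U inE; apply/orP; left; apply/imsetP; exists k. Qed.
Lemma refz_in k : refz k \in dihedral N.
Proof. by rewrite dihedralE /U inE; apply/orP; right; apply/imsetP; exists k. Qed.
Lemma memD g : g \in dihedral N -> (exists k, g = rotz k) \/ (exists k, g = refz k).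
Proof.
rewrite dihedralE /U inE => /orP [] /imsetP [k _ ->]; [left|right]; by exists k.
Qed.

Lemma crot k : (rotz k 1 == rotz k 0 + 1) = true.
Proof. by rewrite !rotzE add0r addrC eqxx. Qed.
Lemma cref k : (refz k 1 == refz k 0 + 1) = false.
Proof.
rewrite !refzE subr0; apply/negbTE/eqP => e.
have e2 : (2:T) = (k + 1) - (k - 1) by ring.
by move: (two_neq0); rewrite e2 -e subrr eqxx.
Qed.
Lemma rotz0 k : rotz k 0 = k. Proof. by rewrite rotzE add0r. Qed.
Lemma refz0 k : refz k 0 = k. Proof. by rewrite refzE subr0. Qed.

Section Dep.
Variable R : pzRingType.
Variable lam : {perm T} -> R.
Hypothesis H : forall i j : T, lam (rotz (j - i)) + lam (refz (i + j)) = 0.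

Lemma HA d : lam (rotz d) = - lam (refz d).
Proof. by apply/eqP; rewrite -addr_eq0; have := H 0 d; rewrite subr0 add0r => ->. Qed.
Lemma HB d : lam (refz (d + 2)) = lam (refz d).
Proof.
have := H 1 (d + 1); have -> : d + 1 - 1 = d by ring.
have -> : 1 + (d + 1) = d + 2 by ring.
by rewrite HA addrC => /eqP; rewrite subr_eq0 => /eqP.
Qed.
Lemma HBm d m : lam (refz (d + (2 * m)%:R)) = lam (refz d).
Proof.
elim: m => [|m IH]; first by rewrite muln0 addr0.
have -> : d + (2 * m.+1)%:R = (d + (2 * m)%:R) + 2 by rewrite mulnS natrD; ring.
by rewrite HB IH.
Qed.
Lemma Bpar k : lam (refz k) = if odd k then lam (refz 1) else lam (refz 0).
Proof.
have e : k = (odd k : nat)%:R + (2 * k./2)%:R.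
  by rewrite -natrD mul2n odd_double_half natT.
rewrite [in LHS]e HBm; by case: (odd k); rewrite ?add0r.
Qed.
Lemma Bodd (oN : odd N) k : lam (refz k) = lam (refz 0).
Proof.
have [m e] : exists m, k = (2 * m)%:R.
  case ok: (odd k).
    exists ((k + N)./2); rewrite mul2n.
    have := odd_double_half (k + N); rewrite oddD ok oN /= add0n => ->.
    rewrite natrD natT.
    by rewrite (_ : N%:R = 0) ?addr0 //; exact: NZ.
  exists (k./2); rewrite mul2n.
  by have := odd_double_half k; rewrite ok /= add0n => ->; rewrite natT.
by rewrite e -[(2 * m)%:R]add0r HBm.
Qed.
End Dep.

Lemma par (eN : ~~ odd N) (i j : T) : odd (val (j - i)) = odd (val (i + j)).
Proof.
have oN : odd N = false by apply/negbTE.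
rewrite /= !odd_mod // oddD odd_mod // oddN //; last exact: ltnW.
by rewrite oddD addbC.
Qed.

Lemma card_D (P : pred {perm T}) :
  #|[set g in dihedral N | P g]| =
  (\sum_(k : T) (P (rotz k) : nat) + \sum_(k : T) (P (refz k) : nat))%N.
Proof.
rewrite -sum1_card.
rewrite (eq_bigl (fun g => (g \in dihedral N) && P g)); last by move=> g; rewrite inE.
rewrite big_mkcondr big_D /=.
by congr (_ + _); apply: eq_bigr => k _; case: (P _).
Qed.

Lemma cnt_even m : (\sum_(0 <= k < 2 * m) (~~ odd k : nat))%N = m.
Proof.
elim: m => [|m IH]; first by rewrite big_geq.
rewrite mulnS !addSn add0n big_nat_recr //= big_nat_recr //= IH.
by rewrite mul2n odd_double /= addn1 addn0.
Qed.
Lemma cnt_odd m : (\sum_(0 <= k < 2 * m) (odd k : nat))%N = m.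
Proof.
elim: m => [|m IH]; first by rewrite big_geq.
rewrite mulnS !addSn add0n big_nat_recr //= big_nat_recr //= IH.
by rewrite mul2n odd_double addn1 addn0.
Qed.

Section Gale.
Variable R : realFieldType.

Definition codd (g : {perm T}) : 'rV[R]_1 :=
  vec1 (if g 1 == g 0 + 1 then 1 else -1).
Definition ceven (g : {perm T}) : 'rV[R]_2 :=
  if g 1 == g 0 + 1 then (if odd (g 0) then vec2 0 1 else vec2 1 0)
  else (if odd (g 0) then vec2 0 (-1) else vec2 (-1) 0).

Lemma sum1E (a : 'rV[R]_1) x : \sum_(j < 1) a 0 j * vec1 x 0 j = a 0 0 * x.
Proof. by rewrite big_ord1 mxE. Qed.
Lemma sum2E (a : 'rV[R]_2) x y :
  \sum_(j < 2) a 0 j * vec2 x y 0 j = a 0 0 * x + a 0 1 * y.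
Proof.
rewrite big_ord_recr big_ord1 /= !mxE.
have -> : widen_ord (leqnSn 1) ord0 = 0 :> 'I_2 by apply: val_inj.
by have -> : ord_max = 1 :> 'I_2 by apply: val_inj.
Qed.
Lemma vec1_eq (x y : R) : (vec1 x == vec1 y) = (x == y).
Proof.
apply/eqP/eqP => [/matrixP /(_ 0 0)|->] //; by rewrite !mxE.
Qed.
Lemma vec2_eq (x y x' y' : R) : (vec2 x y == vec2 x' y') = (x == x') && (y == y').
Proof.
apply/eqP/andP => [/matrixP h|[/eqP -> /eqP ->]] //.
by have := h 0 0; have := h 0 1; rewrite !mxE /= => -> ->.
Qed.
Lemma e01 : ((0:R) == 1) = false. Proof. by apply/eqP => h; lra. Qed.
Lemma e10 : ((1:R) == 0) = false. Proof. by apply/eqP => h; lra. Qed.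
Lemma e0N : ((0:R) == -1) = false. Proof. by apply/eqP => h; lra. Qed.
Lemma eN0 : ((-1:R) == 0) = false. Proof. by apply/eqP => h; lra. Qed.
Lemma e1N : ((1:R) == -1) = false. Proof. by apply/eqP => h; lra. Qed.
Lemma eN1 : ((-1:R) == 1) = false. Proof. by apply/eqP => h; lra. Qed.

Lemma ce_rot k : ceven (rotz k) = if odd k then vec2 0 1 else vec2 1 0.
Proof. by rewrite /ceven crot rotz0. Qed.
Lemma ce_ref k : ceven (refz k) = if odd k then vec2 0 (-1) else vec2 (-1) 0.
Proof. by rewrite /ceven cref refz0. Qed.
Lemma co_rot k : codd (rotz k) = vec1 1. Proof. by rewrite /codd crot. Qed.
Lemma co_ref k : codd (refz k) = vec1 (-1). Proof. by rewrite /codd cref. Qed.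

Lemma gale_odd (oN : odd N) : is_gale_dual (dihedral N) codd.
Proof.
split.
  move=> lam; split.
    move/depE => H; exists (vec1 (lam (rotz 0))) => g /memD [[k ->]|[k ->]].
      by rewrite co_rot sum1E !mxE mulr1 (HA H k) (HA H 0) (Bodd H oN k).
    by rewrite co_ref sum1E !mxE mulrN1 (HA H 0) opprK (Bodd H oN k).
  move=> [a Ha]; apply/depE => i j.
  by rewrite (Ha _ (rotz_in _)) (Ha _ (refz_in _)) co_rot co_ref !sum1E; ring.
move=> a Ha; apply/matrixP => i j; rewrite !ord1 mxE.
by have := Ha _ (rotz_in 0); rewrite co_rot sum1E mulr1.
Qed.

Lemma odd0 : odd (val (0 : T)) = false. Proof. by []. Qed.
Lemma odd1 : odd (val (1 : T)) = true. Proof. by []. Qed.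

Lemma gale_even (eN : ~~ odd N) : is_gale_dual (dihedral N) ceven.
Proof.
split.
  move=> lam; split.
    move/depE => H; exists (vec2 (lam (rotz 0)) (lam (rotz 1))) => g /memD [[k ->]|[k ->]].
      rewrite ce_rot (HA H k) (Bpar H k) (HA H 0) (HA H 1).
      by case: (odd k); rewrite sum2E !mxE /=; ring.
    rewrite ce_ref (Bpar H k) (HA H 0) (HA H 1).
    by case: (odd k); rewrite sum2E !mxE /=; ring.
  move=> [a Ha]; apply/depE => i j.
  rewrite (Ha _ (rotz_in _)) (Ha _ (refz_in _)) ce_rot ce_ref (par eN).
  by case: (odd _); rewrite !sum2E; ring.
move=> a Ha.
have h0 := Ha _ (rotz_in 0); have h1 := Ha _ (rotz_in 1).
rewrite ce_rot odd0 sum2E mulr1 mulr0 addr0 in h0.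
rewrite ce_rot odd1 sum2E mulr1 mulr0 add0r in h1.
apply/rowP => j; rewrite mxE; case: j => [[|[|//]] hj].
  by rewrite (_ : Ordinal hj = 0) //; apply: val_inj.
by rewrite (_ : Ordinal hj = 1) //; apply: val_inj.
Qed.

Lemma even_cases g :
  [\/ ceven g = vec2 1 0, ceven g = vec2 (-1) 0, ceven g = vec2 0 1 | ceven g = vec2 0 (-1)].
Proof.
rewrite /ceven; case: ifP => _; case: ifP => _;
  [exact: Or43|exact: Or41|exact: Or44|exact: Or42].
Qed.

End Gale.

Lemma sum_T (f : nat -> nat) : (\sum_(k : T) f (val k))%N = (\sum_(0 <= k < N) f k)%N.
Proof. by rewrite big_mkord. Qed.

End S.

Ltac vsimp := rewrite ?ce_rot ?ce_ref; case: (odd _);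
  rewrite /= vec2_eq ?eqxx ?e01 ?e10 ?e0N ?eN0 ?e1N ?eN1.

Theorem lemma8 (R : realFieldType) (n : nat) :
  (2 < n)%N ->
  (odd n ->
    exists c : {perm 'I_n} -> 'rV[R]_1,
      is_gale_dual (dihedral n) c /\
      (forall g, g \in dihedral n -> c g = vec1 1 \/ c g = vec1 (-1)) /\
      #|[set g in dihedral n | c g == vec1 1]| = n /\
      #|[set g in dihedral n | c g == vec1 (-1)]| = n) /\
  (forall m : nat, n = (2 * m)%N ->
    exists c : {perm 'I_n} -> 'rV[R]_2,
      is_gale_dual (dihedral n) c /\
      (forall g, g \in dihedral n ->
         [\/ c g = vec2 1 0, c g = vec2 (-1) 0, c g = vec2 0 1 | c g = vec2 0 (-1)]) /\
      #|[set g in dihedral n | c g == vec2 1 0]| = m /\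
      #|[set g in dihedral n | c g == vec2 (-1) 0]| = m /\
      #|[set g in dihedral n | c g == vec2 0 1]| = m /\
      #|[set g in dihedral n | c g == vec2 0 (-1)]| = m).
Proof.
case: n => [|[|[|p]]] // _.
split.
  move=> oN; exists (@codd p R); split; first exact: gale_odd.
  split.
    by move=> g /memD [[k ->]|[k ->]]; [left; rewrite co_rot|right; rewrite co_ref].
  split.
    rewrite card_D (eq_bigr (fun _ => 1%N)) => [|k _]; last by rewrite co_rot eqxx.
    rewrite [X in (_ + X)%N](eq_bigr (fun _ => 0%N)) => [|k _]; last by rewrite co_ref vec1_eq eN1.
    by rewrite sum_nat_const card_ord muln1 big1_eq addn0.
  rewrite card_D (eq_bigr (fun _ => 0%N)) => [|k _]; last by rewrite co_rot vec1_eq e1N.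
  rewrite [X in (_ + X)%N](eq_bigr (fun _ => 1%N)) => [|k _]; last by rewrite co_ref eqxx.
  by rewrite big1_eq add0n sum_nat_const card_ord muln1.
move=> m hm; exists (@ceven p R); split.
  by apply: gale_even; rewrite hm mul2n odd_double.
split; first by move=> g _; exact: even_cases.
have S0 : (\sum_(k : 'I_p.+3) 0)%N = 0%N by rewrite big1_eq.
have Se : (\sum_(k : 'I_p.+3) (~~ odd k : nat))%N = m.
  by rewrite (@sum_T p (fun k => (~~ odd k : nat))) hm cnt_even.
have So : (\sum_(k : 'I_p.+3) (odd k : nat))%N = m.
  by rewrite (@sum_T p (fun k => (odd k : nat))) hm cnt_odd.
split.
  rewrite card_D (eq_bigr (fun k : 'I_p.+3 => (~~ odd k : nat))) => [|k _]; last by vsimp.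
  by rewrite [X in (_ + X)%N](eq_bigr (fun _ => 0%N)) => [|k _]; [rewrite Se S0 addn0|vsimp].
split.
  rewrite card_D (eq_bigr (fun _ => 0%N)) => [|k _]; last by vsimp.
  by rewrite [X in (_ + X)%N](eq_bigr (fun k : 'I_p.+3 => (~~ odd k : nat))) => [|k _]; [rewrite Se S0 add0n|vsimp].
split.
  rewrite card_D (eq_bigr (fun k : 'I_p.+3 => (odd k : nat))) => [|k _]; last by vsimp.
  by rewrite [X in (_ + X)%N](eq_bigr (fun _ => 0%N)) => [|k _]; [rewrite So S0 addn0|vsimp].
rewrite card_D (eq_bigr (fun _ => 0%N)) => [|k _]; last by vsimp.
by rewrite [X in (_ + X)%N](eq_bigr (fun k : 'I_p.+3 => (odd k : nat))) => [|k _]; [rewrite So S0 add0n|vsimp].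
Qed.
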